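(* Let $\mathcal L$ be a finite lattice and $C\subseteq\bar{\mathcal L}$ a crosscut. Let $\bar{\mathcal L}_C$ be the set of elements of $\bar{\mathcal L}$ that are either the join of a nonempty subset of $C$ or the meet of a nonempty subset of $C$, with the induced order. Then $\Delta(\bar{\mathcal L})$ collapses onto $\Delta(\bar{\mathcal L}_C)$.
   Context: For a finite lattice $\mathcal L$ with minimum $\hat0$ and maximum $\hat1$, $\bar{\mathcal L}=\mathcal L\setminus\{\hat0,\hat1\}$. A crosscut is a subset $C\subseteq\bar{\mathcal L}$ that is an antichain and such that for every chain $\gamma$ of $\mathcal L$ there exists $x\in C$ with $\gamma\cup\{x\}$ a chain. $\Delta(Q)$ denotes the order complex of a poset $Q$ (simplices = nonempty chains). *)

(* Defs.v *)
From HB Require Import structures.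
From mathcomp Require Import all_boot all_order.
Set Implicit Arguments. Unset Strict Implicit. Unset Printing Implicit Defensive.
Import Order.TTheory.
Local Open Scope order_scope.

(* Finite simplicial complexes on a finite vertex type T are represented as
   sets of faces ({set {set T}}). *)

Section Defs.
Context {d : Order.disp_t} {L : finTBLatticeType d}.

Definition is_chain (s : {set L}) : bool :=
  [forall x in s, forall y in s, x >=< y].

Definition Lbar : {set L} := [set x : L | (x != \bot) && (x != \top)].

Definition crosscut (C : {set L}) : Prop :=
  [/\ C \subset Lbar,
      (forall x y, x \in C -> y \in C -> x <= y -> x = y)
    & forall g : {set L}, is_chain g -> exists2 x, x \in C & is_chain (x |: g)].

Definition LbarC (C : {set L}) : {set L} :=
  [set x in Lbar | [exists S : {set L}, (S != set0) && (S \subset C) &&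
      ((x == \join_(y in S) y) || (x == \meet_(y in S) y))]].

Definition order_complex (Q : {set L}) : {set {set L}} :=
  [set s : {set L} | [&& s != set0, s \subset Q & is_chain s]].
End Defs.

Section Collapse.
Context {T : finType}.

Definition elem_collapse (K K' : {set {set T}}) : Prop :=
  exists sigma tau : {set T},
    [/\ sigma \in K, tau \in K, sigma \proper tau,
        (forall rho, rho \in K -> sigma \subset rho -> rho = sigma \/ rho = tau)
      & K' = K :\: [set sigma; tau]].

Inductive collapses : {set {set T}} -> {set {set T}} -> Prop :=
  | collapses_refl K : collapses K K
  | collapses_step K K1 K' : elem_collapse K K1 -> collapses K1 K' -> collapses K K'.
End Collapse.

(* Main.v *)
Require Import Defs.
From mathcomp Require Import all_boot all_order.
Set Implicit Arguments. Unset Strict Implicit. Unset Printing Implicit Defensive.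

Lemma collapses_trans (T : finType) (A B C : {set {set T}}) :
  collapses A B -> collapses B C -> collapses A C.
Proof.
elim=> [K //|K K1 K' h _ IH] hC; exact: collapses_step h (IH hC).
Qed.

Lemma remove_pairs (T : finType) (z : T) (n : nat) (K' R : {set {set T}}) :
  #|R| <= n ->
  (forall s t : {set T}, s \in R -> s \subset t -> t \notin K') ->
  (forall s : {set T}, z \notin s -> (s \in R) = (z |: s \in R)) ->
  collapses (K' :|: R) K'.
Proof.
elim: n R => [|n IH] R hn hK hR.
  have -> : R = set0 by apply/eqP; rewrite -cards_eq0 -leqn0.
  by rewrite setU0; constructor.
have [->|/set0Pn [s1 s1R]] := eqVneq R set0; first by rewrite setU0; constructor.
set Rz := [set s in R | z \notin s].
have s0Rz : s1 :\ z \in Rz.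
  rewrite [_ \in Rz]inE setD11 andbT.
  case: (boolP (z \in s1)) => zs1; last first.
    have -> : s1 :\ z = s1 by apply/setP=> w; rewrite !inE; case: eqVneq => // ->; rewrite (negbTE zs1).
    done.
  by rewrite hR ?setD11 // setD1K.
case: (arg_maxnP (fun s : {set T} => #|s|) s0Rz) => sg H maxsg.
have : sg \in Rz := H; rewrite inE => /andP [sgR zsg].
set tau := z |: sg.
have tauR : tau \in R by rewrite -hR.
have sgtau : sg != tau.
  by apply/eqP => e; move: zsg; rewrite e setU11.
apply: (@collapses_step _ _ (K' :|: (R :\: [set sg; tau]))).
  exists sg, tau; split.
  - by rewrite inE sgR orbT.
  - by rewrite inE tauR orbT.
  - by rewrite properEneq sgtau subsetUr.
  - move=> rho; rewrite inE => /orP [rK|rR] srho.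
      by move: (hK _ _ sgR srho); rewrite rK.
    case: (boolP (z \in rho)) => zr.
      have rzR : rho :\ z \in R by rewrite hR ?setD11 // setD1K.
      have srz : sg \subset rho :\ z.
        by apply/subsetP => w ws; rewrite !inE (subsetP srho) // andbT;
           apply/eqP => e; move: zsg; rewrite -e ws.
      have : #|rho :\ z| <= #|sg| by apply: maxsg; have : rho :\ z \in Rz by rewrite inE rzR setD11.
      move=> hc; have /eqP e : sg == rho :\ z by rewrite eqEcard srz hc.
      by right; rewrite /tau e setD1K.
    left; apply/eqP; rewrite eq_sym eqEcard srho /=.
    by apply: maxsg; have : rho \in Rz by rewrite inE rR zr.
  - apply/setP => w; rewrite !inE.
    case: (boolP (w \in K')) => wK /=; last by rewrite andbC.
    have /negbTE -> : w != sg by apply/eqP => e; move: (hK _ _ sgR (subxx sg)); rewrite -e wK.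
    have /negbTE -> : w != tau by apply/eqP => e; move: (hK _ _ tauR (subxx tau)); rewrite -e wK.
    by [].
apply: IH.
- rewrite -ltnS; apply: leq_trans hn; rewrite cardsDS; last first.
    by apply/subsetP => w; rewrite !inE => /orP [] /eqP ->.
  rewrite -subn_gt0 subKn ?subset_leq_card ?cardsU1 ?inE ?sgtau ?cards1 //.
  by apply/subsetP => w; rewrite !inE => /orP [] /eqP ->.
- by move=> s t; rewrite inE => /andP [_ sR]; apply: hK.
- move=> s zs; rewrite !inE -hR //.
  congr (_ && _); congr (~~ _).
  have -> : (z |: s == sg) = false by apply/negbTE/eqP => e; move: zsg; rewrite -e setU11.
  have -> : (s == tau) = false by apply/negbTE/eqP => e; move: zs; rewrite e setU11.
  rewrite orbF /=; apply/eqP/eqP => [->//|e].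
  apply/setP => w; have := congr1 (fun S : {set T} => w \in S) e; rewrite !inE.
  case: (eqVneq w z) => [->|//]; by rewrite (negbTE zs) (negbTE zsg).
Qed.

Module P2.
Import Order.TTheory.
Local Open Scope order_scope.

Section S.
Context {d : Order.disp_t} {L : finTBLatticeType d}.

Lemma is_chainP (s : {set L}) :
  reflect (forall a b, a \in s -> b \in s -> a >=< b) (is_chain s).
Proof.
apply: (iffP forall_inP) => [h a b aS bS|h a aS].
  by have /forall_inP := h a aS; apply.
by apply/forall_inP => b bs; apply: h.
Qed.

Lemma chain_sub (s t : {set L}) : is_chain t -> s \subset t -> is_chain s.
Proof.
move=> /is_chainP h st; apply/is_chainP => a b aS bS.
by apply: h; apply: (subsetP st).
Qed.

Lemma oc_split (P : {set L}) (x : L) :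
  order_complex P = order_complex (P :\ x) :|: [set s in order_complex P | x \in s].
Proof.
apply/setP => s; rewrite !inE.
case: (boolP (x \in s)) => xs.
  have -> : s \subset P :\ x = false.
    by apply/negbTE/negP => /subsetP /(_ _ xs); rewrite !inE eqxx.
  by rewrite andbT andbF.
have -> : (s \subset P :\ x) = (s \subset P).
  apply/idP/idP => /subsetP h; apply/subsetP => w ws; have := h w ws; rewrite !inE.
    by case/andP.
  by move=> ->; rewrite andbT; apply/eqP => e; move: xs; rewrite -e ws.
by rewrite andbF orbF.
Qed.


Lemma remove_vertex (P : {set L}) (x z : L) :
  x \in P -> z \in P -> z != x -> x >=< z ->
  (forall y, y \in P -> y != x -> x >=< y -> z >=< y) ->
  collapses (order_complex P) (order_complex (P :\ x)).
Proof.
move=> xP zP zx xz cone.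
rewrite {1}(oc_split P x).
apply: (@remove_pairs _ z #|[set s in order_complex P | x \in s]|) => //.
  move=> s t; rewrite !inE => /andP [_ xs] /subsetP st.
  apply/negP => /and3P [_ /subsetP tP _].
  by have := tP x (st x xs); rewrite !inE eqxx.
move=> s zs; rewrite !inE.
have xzs : (x \in z |: s) = (x \in s) by rewrite !inE eq_sym (negbTE zx).
rewrite (eq_sym x z) (negbTE zx) /=; case: (boolP (x \in s)) => xs; rewrite ?andbF //.
rewrite !andbT; apply/idP/idP.
  case/and3P => _ sP ch; apply/and3P; split.
  - by apply/set0Pn; exists z; rewrite !inE eqxx.
  - by apply/subsetP => w; rewrite !inE => /orP [/eqP ->//|]; apply: (subsetP sP).
  - apply/is_chainP => a b; rewrite !inE.
    have gen : forall w, w \in s -> z >=< w.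
      move=> w ws; case: (eqVneq w x) => [->|wx]; first by rewrite comparable_sym.
      by apply: cone; [apply: (subsetP sP)|done|apply: (is_chainP _ ch)].
    case/orP => [/eqP ->|aS]; case/orP => [/eqP ->|bS].
    + exact: comparablexx.
    + exact: gen.
    + by rewrite comparable_sym; apply: gen.
    + exact: (is_chainP _ ch).
case/and3P => _ sP ch; apply/and3P; split.
- by apply/set0Pn; exists x.
- by apply: subset_trans sP; apply: subsetUr.
- by apply: chain_sub ch _; apply: subsetUr.
Qed.

End S.

End P2.
Import P2.
Module P3.
Import Order.TTheory.
Local Open Scope order_scope.

Section M.
Context {d : Order.disp_t} {L : finTBLatticeType d} (C : {set L}).
Context (cc : crosscut C).

Definition rk (x : L) := #|[set w : L | w < x]|.

Lemma rk_lt (x y : L) : y < x -> (rk y < rk x)%N.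
Proof.
move=> yx; apply: proper_card; rewrite properE; apply/andP; split.
  by apply/subsetP => w; rewrite !inE => wy; apply: lt_trans wy yx.
by apply/subsetP => /(_ y); rewrite !inE ltxx yx => /(_ isT).
Qed.

Lemma CLbar c : c \in C -> c \in Lbar.
Proof. by case: cc => /subsetP h _ _; apply: h. Qed.

Lemma Canti c c' : c \in C -> c' \in C -> c <= c' -> c = c'.
Proof. by case: cc => _ h _; apply: h. Qed.

Lemma Ccross (g : {set L}) : is_chain g -> exists2 c, c \in C & is_chain (c |: g).
Proof. by case: cc => _ _ h; apply: h. Qed.

Lemma CLbarC c : c \in C -> c \in LbarC C.
Proof.
move=> cC; rewrite inE CLbar //=; apply/existsP; exists [set c].
rewrite big_set1 eqxx /= andbT; apply/andP; split.
  by apply/set0Pn; exists c; rewrite inE.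
by rewrite sub1set.
Qed.

Lemma LbarCP y : y \in LbarC C -> exists2 T : {set L}, (T != set0) && (T \subset C) &
   (y = \join_(t in T) t) \/ (y = \meet_(t in T) t).
Proof.
rewrite inE => /andP [_ /existsP [T /andP [/andP [h1 h2] h3]]].
exists T; first by rewrite h1 h2.
by case/orP: h3 => /eqP e; [left|right].
Qed.

Lemma chain2 (a b : L) : a >=< b -> is_chain [set a; b].
Proof.
move=> ab; apply/is_chainP => u v; rewrite !inE.
by case/orP => /eqP ->; case/orP => /eqP ->;
  rewrite ?comparablexx // comparable_sym.
Qed.

Lemma cross2 (a b : L) : a >=< b -> exists2 c, c \in C & (c >=< a) && (c >=< b).
Proof.
move=> /chain2 /Ccross [c cC /is_chainP ch]; exists c => //.
by rewrite !ch // !inE eqxx ?orbT.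
Qed.

Lemma Lbar_nb (y : L) : y \in Lbar -> y != \bot. Proof. by rewrite inE => /andP []. Qed.
Lemma Lbar_nt (y : L) : y \in Lbar -> y != \top. Proof. by rewrite inE => /andP []. Qed.


Lemma stepA (P : {set L}) (x : L) : LbarC C \subset P -> x \in P ->
  x \notin LbarC C -> x \in Lbar ->
  (exists2 c0, c0 \in C & c0 < x) ->
  (forall y, y \in P -> y \notin LbarC C -> [exists c in C, c < y] -> (rk x <= rk y)%N) ->
  collapses (order_complex P) (order_complex (P :\ x)).
Proof.
move=> /subsetP sub xP xnC xL [c0 c0C c0x] minx.
set S := [set c in C | c <= x].
set z := \join_(t in S) t.
have zx : z <= x by apply: joins_le => t; rewrite inE => /andP [].
have c0S : c0 \in S by rewrite inE c0C ltW.
have c0z : c0 <= z := joins_sup id c0S.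
have cz : forall c, c \in C -> c <= x -> c <= z.
  by move=> c cC cx; apply: joins_sup; rewrite inE cC cx.
have zC : z \in LbarC C.
  rewrite inE; apply/andP; split.
    rewrite inE; apply/andP; split.
      apply/eqP => e; move: c0z; rewrite e lex0 => /eqP e0.
      by move: (Lbar_nb (CLbar c0C)); rewrite e0 eqxx.
    apply/eqP => e; move: zx; rewrite e le1x => /eqP e0.
    by move: (Lbar_nt xL); rewrite e0 eqxx.
  apply/existsP; exists S; rewrite eqxx orTb andbT; apply/andP; split.
    by apply/set0Pn; exists c0.
  by apply/subsetP => t; rewrite inE => /andP [].
have zx' : z != x by apply/eqP => e; move: xnC; rewrite -e zC.
apply: (remove_vertex xP (sub _ zC) zx' (ge_comparable zx)).
move=> y yP yx /orP [xy|yx'].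
  by apply: le_comparable; apply: le_trans xy.
apply: ge_comparable.
have yltx : y < x by rewrite lt_neqAle yx yx'.
case: (cross2 (ge_comparable yx')) => c cC /andP [cx cy].
have cxle : c <= x.
  case/orP: cx => // xc.
  have e := Canti c0C cC (le_trans (ltW c0x) xc).
  by move: c0x; rewrite e => /lt_le_trans /(_ xc); rewrite ltxx.
case/orP: cy => [cy|yc]; last by apply: le_trans yc (cz _ cC cxle).
case: (boolP (y \in LbarC C)) => yC; last first.
  have cy' : c < y.
    by rewrite lt_neqAle cy andbT; apply/eqP => e; move: yC; rewrite -e CLbarC.
  have := minx y yP yC; rewrite (leqNgt) rk_lt //.
  have hE : [exists c1 in C, c1 < y] by apply/existsP; exists c; rewrite cC cy'.
  by move=> /(_ hE).

case: (LbarCP yC) => T /andP [Tn TC] [e|e].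
  rewrite {1}e; apply: joins_le => t tT; apply: cz; first by apply: (subsetP TC).
  apply: le_trans (ltW yltx); rewrite e; exact: (joins_sup id tT).
case/set0Pn: Tn => t tT.
have yt : y <= t by rewrite e; apply: meets_inf.
have ct := Canti cC (subsetP TC _ tT) (le_trans cy yt).
by rewrite ct in cxle cC *; apply: le_trans yt (cz _ cC cxle).
Qed.


Lemma stepB (P : {set L}) (x : L) : LbarC C \subset P -> x \in P ->
  x \notin LbarC C -> x \in Lbar ->
  (forall y, y \in P -> y \notin LbarC C -> ~~ [exists c in C, c < y]) ->
  (forall y, y \in P -> y \notin LbarC C -> (rk y <= rk x)%N) ->
  collapses (order_complex P) (order_complex (P :\ x)).
Proof.
move=> /subsetP sub xP xnC xL noA maxx.
have cbelow : forall c, c \in C -> c >=< x -> x <= c.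
  move=> c cC /orP [cx|//].
  have cx' : c < x.
    by rewrite lt_neqAle cx andbT; apply/eqP => e; move: xnC; rewrite -e CLbarC.
  have := noA x xP xnC.
  by have -> : [exists c1 in C, c1 < x] by apply/existsP; exists c; rewrite cC cx'.
have [c0 c0C c0x] : exists2 c0, c0 \in C & x <= c0.
  case: (cross2 (comparablexx x)) => c cC /andP [cx _].
  by exists c => //; apply: cbelow.
set S := [set c in C | x <= c].
set z := \meet_(t in S) t.
have xz : x <= z by apply: meets_ge => t; rewrite inE => /andP [].
have c0S : c0 \in S by rewrite inE c0C c0x.
have zc0 : z <= c0 := meets_inf id c0S.
have zc : forall c, c \in C -> x <= c -> z <= c.
  by move=> c cC cx; apply: (meets_inf id); rewrite inE cC cx.
have zC : z \in LbarC C.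
  rewrite inE; apply/andP; split.
    rewrite inE; apply/andP; split.
      apply/eqP => e; move: xz; rewrite e lex0 => /eqP e0.
      by move: (Lbar_nb xL); rewrite e0 eqxx.
    apply/eqP => e; move: zc0; rewrite e le1x => /eqP e0.
    by move: (Lbar_nt (CLbar c0C)); rewrite e0 eqxx.
  apply/existsP; exists S; rewrite eqxx orbT andbT; apply/andP; split.
    by apply/set0Pn; exists c0.
  by apply/subsetP => t; rewrite inE => /andP [].
have zx' : z != x by apply/eqP => e; move: xnC; rewrite -e zC.
apply: (remove_vertex xP (sub _ zC) zx' (le_comparable xz)).
move=> y yP yx /orP [xy|yx']; last first.
  by apply: ge_comparable; apply: le_trans xz.
apply: le_comparable.
have xlty : x < y by rewrite lt_neqAle eq_sym yx xy.
case: (cross2 (le_comparable xy)) => c cC /andP [cx cy].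
have xc := cbelow c cC cx.
case/orP: cy => [cy|yc]; first by apply: le_trans (zc _ cC xc) cy.
case: (boolP (y \in LbarC C)) => yC; last first.
  by have := maxx y yP yC; rewrite leqNgt rk_lt.
case: (LbarCP yC) => T /andP [Tn TC] [e|e]; last first.
  rewrite e; apply: meets_ge => t tT; apply: zc; first by apply: (subsetP TC).
  apply: le_trans (ltW xlty) _; rewrite e; exact: (meets_inf id tT).
case/set0Pn: Tn => t tT.
have ty : t <= y by rewrite e; apply: (joins_sup id).
have ct := Canti (subsetP TC _ tT) cC (le_trans ty yc).
by rewrite -ct in xc cC *; apply: le_trans (zc _ cC xc) ty.
Qed.


Lemma main_ind (n : nat) (P : {set L}) : (#|P :\: LbarC C| <= n)%N ->
  LbarC C \subset P -> P \subset Lbar ->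
  collapses (order_complex P) (order_complex (LbarC C)).
Proof.
elim: n P => [|n IH] P hn sub sP.
  have e : P = LbarC C.
    apply/eqP; rewrite eqEsubset sub andbT; apply/subsetP => w wP.
    case: (boolP (w \in LbarC C)) => // wn.
    have : w \in P :\: LbarC C by rewrite inE wn wP.
    by move: hn; rewrite leqn0 => /eqP /card0_eq ->.
  by rewrite e; constructor.
have [e0|/set0Pn [w0 w0P]] := eqVneq (P :\: LbarC C) set0.
  apply: (IH P) => //; by rewrite e0 cards0.
have rest : forall x, x \in P -> x \notin LbarC C ->
    collapses (order_complex P) (order_complex (P :\ x)) ->
    collapses (order_complex P) (order_complex (LbarC C)).
  move=> x xP xn h; apply: (collapses_trans h); apply: IH.
  - rewrite -ltnS; apply: leq_trans hn.
    have -> : P :\ x :\: LbarC C = (P :\: LbarC C) :\ x.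
      by apply/setP => w; rewrite !inE andbCA.
    by rewrite [X in (_ < X)%N](cardsD1 x (P :\: LbarC C)) in_setD xn xP.
  - apply/subsetP => w wC; rewrite !inE (subsetP sub _ wC) andbT.
    by apply/eqP => e; move: xn; rewrite -e wC.
  - by apply: subset_trans sP; apply: subsetDl.
set isA := fun y => [exists c in C, c < y].
case: (boolP [exists y in P :\: LbarC C, isA y]).
  move=> /existsP [y0 /andP [y0P y0A]].
  have y0D : y0 \in [set y in P :\: LbarC C | isA y] by rewrite inE y0P y0A.
  case: (arg_minnP rk y0D) => x H minx.
  have : x \in [set y in P :\: LbarC C | isA y] := H.
  rewrite in_set in_setD => /andP [/andP [xn xP] /existsP [c0 /andP [c0C c0x]]].
  apply: (rest x xP xn); apply: stepA => //.
  - by apply: (subsetP sP).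
  - by exists c0.
  - move=> y yP yn yA.
    have h : y \in [set y in P :\: LbarC C | isA y] by rewrite in_set in_setD yn yP; exact: yA.
    exact: minx h.
move=> noA.
have w0D : w0 \in P :\: LbarC C := w0P.
case: (arg_maxnP rk w0D) => x H maxx.
have : x \in P :\: LbarC C := H.
rewrite in_setD => /andP [xn xP].
apply: (rest x xP xn); apply: stepB => //.
- by apply: (subsetP sP).
- move=> y yP yn; apply/negP => yA; move/negP: noA; apply.
  by apply/existsP; exists y; rewrite in_setD yn yP.
- move=> y yP yn.
  have h : y \in P :\: LbarC C by rewrite in_setD yn yP.
  exact: maxx h.
Qed.

End M.


End P3.
Import P3.
Theorem mainTheorem5 (d : Order.disp_t) (L : finTBLatticeType d) (C : {set L}) :
  crosscut C -> collapses (order_complex (@Lbar d L)) (order_complex (LbarC C)).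
Proof.
move=> cc; apply: (main_ind cc (leqnn _)) => //.
by apply/subsetP => w; rewrite inE => /andP [].
Qed.
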